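(* Let $(X,d)$ be a tree space, let $x,y,z\in X$ be distinct, let $r\in X$ be the Steiner point of $x,y,z$, and let $V\subseteq X\setminus\{x,y,z\}$ be a finite set of points. Then: (1) If $w\in \mathrm{Zone}_1(x)$, then for every $\hat w\in V\setminus \mathrm{Zone}_1(x)$ we have $x\in g(w,\hat w)$. (2) If $w\in \mathrm{Zone}_2(x)$, then for every $\hat w\in V\setminus\big(\mathrm{Zone}_1(x)\cup\mathrm{Zone}_2(x)\big)$ we have $r\in g(w,\hat w)$.
   Context: A tree space ($\mathbb{R}$-tree) is a metric space in which any two points $a,b$ are joined by a unique geodesic segment $g(a,b)$, and the union of two geodesic segments $g(a,b),g(b,c)$ meeting only at $b$ is $g(a,c)$. For distinct $x,y,z$ in a tree space, the geodesics $g(x,y),g(y,z),g(x,z)$ meet in a unique point $r$, the Steiner point (it is the center of the universal tree on $x,y,z$, with $d(x,r)=(y,z)_x$ etc.). The Gromov product is $(a,b)_c=\tfrac12\big(d(c,a)+d(c,b)-d(a,b)\big)$. For $w\in V$ and a permutation $\pi$ of $\{x,y,z\}$ define the zones: $w\in\mathrm{Zone}_1(r)$ if $(x,y)_w=(x,z)_w=(y,z)_w>0$; $w\in\mathrm{Zone}_1(\pi x)$ if $(\pi x,\pi y)_w=(\pi x,\pi z)_w<(\pi y,\pi z)_w$ and $d(\pi x,w)=(\pi x,\pi y)_w$; $w\in\mathrm{Zone}_2(\pi x)$ if $(\pi x,\pi y)_w=(\pi x,\pi z)_w<(\pi y,\pi z)_w$ and $d(\pi x,w)>(\pi x,\pi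 y)_w$. (In particular $\mathrm{Zone}_1(x),\mathrm{Zone}_2(x)$ are these with $\pi$ the identity.) *)

(* Defs.v *)
From Stdlib Require Import Reals List.
Open Scope R_scope.

Definition is_metric {X : Type} (d : X -> X -> R) : Prop :=
  (forall a b, 0 <= d a b) /\
  (forall a b, d a b = 0 <-> a = b) /\
  (forall a b, d a b = d b a) /\
  (forall a b c, d a c <= d a b + d b c).

Definition geodesic {X : Type} (d : X -> X -> R) (f : R -> X) (a b : X) : Prop :=
  f 0 = a /\ f (d a b) = b /\
  (forall s t, 0 <= s <= d a b -> 0 <= t <= d a b -> d (f s) (f t) = Rabs (s - t)).

Definition geod_image {X : Type} (d : X -> X -> R) (f : R -> X) (a b : X) (p : X) : Prop :=
  exists t, 0 <= t <= d a b /\ f t = p.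

Definition in_g {X : Type} (d : X -> X -> R) (a b p : X) : Prop :=
  exists f, geodesic d f a b /\ geod_image d f a b p.

Definition tree_space {X : Type} (d : X -> X -> R) : Prop :=
  is_metric d /\
  (forall a b, exists f, geodesic d f a b) /\
  (forall a b f1 f2, geodesic d f1 a b -> geodesic d f2 a b ->
     forall p, geod_image d f1 a b p <-> geod_image d f2 a b p) /\
  (forall a b c, (forall p, in_g d a b p -> in_g d b c p -> p = b) ->
     forall p, in_g d a c p <-> (in_g d a b p \/ in_g d b c p)).

Definition gromov {X : Type} (d : X -> X -> R) (a b c : X) : R :=
  (d c a + d c b - d a b) / 2.

Definition steiner_point {X : Type} (d : X -> X -> R) (x y z r : X) : Prop :=
  in_g d x y r /\ in_g d y z r /\ in_g d x z r.

Definition zone1 {X : Type} (d : X -> X -> R) (x y z w : X) : Prop :=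
  gromov d x y w = gromov d x z w /\ gromov d x z w < gromov d y z w /\
  d x w = gromov d x y w.

Definition zone2 {X : Type} (d : X -> X -> R) (x y z w : X) : Prop :=
  gromov d x y w = gromov d x z w /\ gromov d x z w < gromov d y z w /\
  d x w > gromov d x y w.

(* Main.v *)
Require Import Defs.
From Stdlib Require Import Reals List Lra Classical.
Open Scope R_scope.

Definition Bt {X : Type} (d : X -> X -> R) a p b := d a p + d p b = d a b.

Lemma in_g_Bt {X : Type} (d : X -> X -> R) a b p :
  tree_space d -> in_g d a b p -> Bt d a p b.
Proof.
  intros Ht [f [[f0 [fab fiso]] [t [[t0 t1] ft]]]].
  destruct Ht as [[d0 [deq [dsym dtri]]] _].
  unfold Bt. subst p.
  assert (H1 := fiso 0 t ltac:(lra) ltac:(lra)). rewrite f0 in H1.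
  assert (H2 := fiso t (d a b) ltac:(lra) ltac:(lra)). rewrite fab in H2.
  rewrite Rabs_left1 in H1 by lra. rewrite Rabs_left1 in H2 by lra. lra.
Qed.

Lemma Bt_in_g {X : Type} (d : X -> X -> R) a b p :
  tree_space d -> Bt d a p b -> in_g d a b p.
Proof.
  intros Ht HB. pose proof Ht as [[d0 [deq [dsym dtri]]] [gex _]].
  unfold Bt in HB.
  destruct (gex a p) as [f1 [f10 [f1p f1i]]].
  destruct (gex p b) as [f2 [f20 [f2b f2i]]].
  pose proof (d0 a p). pose proof (d0 p b).
  set (f := fun s => if Rle_dec s (d a p) then f1 s else f2 (s - d a p)).
  assert (MIX: forall s t, 0 <= s <= d a p -> d a p < t <= d a b ->
     d (f1 s) (f2 (t - d a p)) = t - s).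
  { intros s t Hs Htt.
    assert (E1 := f1i s (d a p) ltac:(lra) ltac:(lra)). rewrite f1p in E1.
    rewrite Rabs_left1 in E1 by lra.
    assert (E2 := f1i 0 s ltac:(lra) ltac:(lra)). rewrite f10 in E2.
    rewrite Rabs_left1 in E2 by lra.
    assert (E3 := f2i 0 (t - d a p) ltac:(lra) ltac:(lra)). rewrite f20 in E3.
    rewrite Rabs_left1 in E3 by lra.
    assert (E4 := f2i (t - d a p) (d p b) ltac:(lra) ltac:(lra)). rewrite f2b in E4.
    rewrite Rabs_left1 in E4 by lra.
    pose proof (dtri (f1 s) p (f2 (t - d a p))).
    pose proof (dtri a (f1 s) b).
    pose proof (dtri (f1 s) (f2 (t - d a p)) b).
    lra. }
  exists f. split; [split; [|split] | ].
  - unfold f. destruct (Rle_dec 0 (d a p)) as [_|n]; [exact f10| lra].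
  - unfold f. destruct (Rle_dec (d a b) (d a p)) as [h|h].
    + assert (Hz : d p b = 0) by lra. apply deq in Hz. subst b.
      replace (d a p) with (d a p + 0) by lra. rewrite Rplus_0_r. exact f1p.
    + replace (d a b - d a p) with (d p b) by lra. exact f2b.
  - intros s t Hs Htt. unfold f.
    destruct (Rle_dec s (d a p)), (Rle_dec t (d a p)).
    + apply f1i; lra.
    + rewrite MIX by lra. rewrite Rabs_left1; lra.
    + rewrite dsym. rewrite MIX by lra. rewrite Rabs_right; lra.
    + replace (s - t) with ((s - d a p) - (t - d a p)) by lra. apply f2i; lra.
  - exists (d a p). split. lra. unfold f. destruct Rle_dec; [exact f1p | lra].
Qed.

Lemma geod_pt {X : Type} (d : X -> X -> R) f e a p :
  tree_space d -> geodesic d f e a -> Bt d e p a -> f (d e p) = p.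
Proof.
  intros Ht Hf HB.
  destruct (Bt_in_g d e a p Ht HB) as [f' [Hf' Hi]].
  pose proof Ht as [[d0 [deq [dsym dtri]]] [gex [guniq _]]].
  destruct (proj1 (guniq e a f' f Hf' Hf p) Hi) as [t [Ht1 ft]].
  destruct Hf as [f0 [fa fi]].
  assert (H := fi 0 t ltac:(lra) Ht1). rewrite f0, ft in H.
  rewrite Rabs_left1 in H by lra. rewrite H. replace (- (0 - t)) with t by lra.
  exact ft.
Qed.

Lemma Bt_uniq {X : Type} (d : X -> X -> R) e a p q :
  tree_space d -> Bt d e p a -> Bt d e q a -> d e p = d e q -> p = q.
Proof.
  intros Ht Hp Hq E. pose proof Ht as [_ [gex _]].
  destruct (gex e a) as [f Hf].
  rewrite <- (geod_pt d f e a p Ht Hf Hp), <- (geod_pt d f e a q Ht Hf Hq), E.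
  reflexivity.
Qed.

Lemma Bt_ex {X : Type} (d : X -> X -> R) e a t :
  tree_space d -> 0 <= t <= d e a -> exists q, Bt d e q a /\ d e q = t.
Proof.
  intros Ht Htt. pose proof Ht as [_ [gex _]].
  destruct (gex e a) as [f [f0 [fa fi]]].
  exists (f t). unfold Bt.
  assert (H1 := fi 0 t ltac:(lra) ltac:(lra)). rewrite f0 in H1.
  assert (H2 := fi t (d e a) ltac:(lra) ltac:(lra)). rewrite fa in H2.
  rewrite Rabs_left1 in H1 by lra. rewrite Rabs_left1 in H2 by lra. lra.
Qed.

Lemma Bt_trans {X : Type} (d : X -> X -> R) x q k a :
  tree_space d -> Bt d x q k -> Bt d x k a -> Bt d x q a.
Proof.
  intros Ht H1 H2. destruct Ht as [[d0 [deq [dsym dtri]]] _]. unfold Bt in *.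
  pose proof (dtri x q a). pose proof (dtri q k a). lra.
Qed.

Lemma Bt_order {X : Type} (d : X -> X -> R) e q k c :
  tree_space d -> Bt d e q c -> Bt d e k c -> d e q <= d e k -> Bt d e q k.
Proof.
  intros Ht H1 H2 Hle. pose proof Ht as [[d0 _] _].
  destruct (Bt_ex d e k (d e q) Ht ltac:(pose proof (d0 e q); lra)) as [q' [Hq' E]].
  assert (Hc : Bt d e q' c) by (eapply Bt_trans; eauto).
  assert (q' = q) by (eapply Bt_uniq; eauto). subst. exact Hq'.
Qed.

Lemma center {X : Type} (d : X -> X -> R) a b e :
  tree_space d -> exists m, Bt d e m a /\ Bt d e m b /\ Bt d a m b.
Proof.
  intros Ht. pose proof Ht as [[d0 [deq [dsym dtri]]] [gex [guniq gglue]]].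
  destruct (gex e a) as [f Hf]. pose proof Hf as [f0 [fa fi]].
  set (E := fun t => 0 <= t <= d e a /\ Bt d e (f t) b).
  assert (Hb : bound E). { exists (d e a). intros t [Ht1 _]. lra. }
  assert (HE0 : E 0).
  { split. pose proof (d0 e a); lra. unfold Bt. rewrite f0.
    assert (d e e = 0) by (apply deq; reflexivity). lra. }
  destruct (completeness E Hb (ex_intro _ 0 HE0)) as [dl [Hub Hlub]].
  assert (Hd0 : 0 <= dl) by (apply Hub; exact HE0).
  assert (Hd1 : dl <= d e a).
  { apply Hlub. intros t [Ht1 _]. lra. }
  assert (Dfd : d e (f dl) = dl).
  { assert (H1 := fi 0 dl ltac:(lra) ltac:(lra)). rewrite f0 in H1.
    rewrite Rabs_left1 in H1 by lra. lra. }
  assert (HB : Bt d e (f dl) b).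
  { unfold Bt. pose proof (dtri e (f dl) b).
    apply Rle_antisym; [|lra].
    apply Rnot_lt_le. intro Hlt.
    set (eta := d e (f dl) + d (f dl) b - d e b).
    destruct (classic (exists t, E t /\ dl - eta/2 < t)) as [[t [[Ht1 Ht2] Ht3]]|Hn].
    - assert (t <= dl) by (apply Hub; split; assumption).
      assert (H1 := fi t dl ltac:(lra) ltac:(lra)).
      rewrite Rabs_left1 in H1 by lra.
      assert (H2 := fi 0 t ltac:(lra) ltac:(lra)). rewrite f0 in H2.
      rewrite Rabs_left1 in H2 by lra.
      unfold Bt in Ht2.
      pose proof (dtri (f dl) (f t) b). rewrite (dsym (f dl) (f t)) in *.
      unfold eta in *. lra.
    - assert (dl <= dl - eta/2).
      { apply Hlub. intros t Ht'. apply Rnot_lt_le. intro. apply Hn. exists t. auto. }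
      unfold eta in *. lra. }
  exists (f dl). split; [|split].
  - unfold Bt. assert (H2 := fi dl (d e a) ltac:(lra) ltac:(lra)). rewrite fa in H2.
    rewrite Rabs_left1 in H2 by lra. lra.
  - exact HB.
  - set (m := f dl) in *.
    assert (Bema : Bt d e m a).
    { unfold Bt. assert (H2 := fi dl (d e a) ltac:(lra) ltac:(lra)). rewrite fa in H2.
      rewrite Rabs_left1 in H2 by lra. change (f dl) with m in H2. lra. }
    assert (Hg : forall p, in_g d a m p -> in_g d m b p -> p = m).
    { intros p H1 H2. apply (in_g_Bt d _ _ _ Ht) in H1. apply (in_g_Bt d _ _ _ Ht) in H2.
      unfold Bt in *.
      pose proof (dtri e m p). pose proof (dtri e p a). pose proof (dtri e p b).
      pose proof (dsym a p). pose proof (dsym p m). pose proof (dsym a m).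
      assert (Bepa : Bt d e p a) by (unfold Bt; lra).
      assert (Bepb : Bt d e p b) by (unfold Bt; lra).
      assert (Hfp := geod_pt d f e a p Ht Hf Bepa).
      assert (E (d e p)).
      { split. split; [apply d0|]. unfold Bt in Bepa. pose proof (d0 p a). lra.
        rewrite Hfp. exact Bepb. }
      assert (d e p <= dl) by (apply Hub; assumption).
      assert (Hmp : d m p = 0) by (pose proof (d0 m p); lra).
      apply deq in Hmp. auto. }
    assert (Hmm : in_g d a m m).
    { apply Bt_in_g; auto. unfold Bt. assert (d m m = 0) by (apply deq; auto). lra. }
    apply (in_g_Bt d _ _ _ Ht). apply (proj2 (gglue a m b Hg m)). left. exact Hmm.
Qed.

Lemma fpc {X : Type} (d : X -> X -> R) a b c e :
  tree_space d ->
  d a b + d e c <= d a c + d b e \/ d a b + d e c <= d a e + d b c.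
Proof.
  intros Ht. pose proof Ht as [[d0 [deq [dsym dtri]]] _].
  destruct (center d a b e Ht) as [m [M1 [M2 M3]]].
  destruct (center d a c e Ht) as [k [K1 [K2 K3]]].
  destruct (center d b c e Ht) as [l [L1 [L2 L3]]].
  assert (Key : d e k <= d e m \/ d e l <= d e m).
  { destruct (Rle_lt_dec (d e k) (d e m)) as [h|h]; [left; exact h|].
    destruct (Rle_lt_dec (d e l) (d e m)) as [h'|h']; [right; exact h'|].
    exfalso.
    set (t := Rmin (d e k) (d e l)).
    assert (t1 : t <= d e k) by apply Rmin_l.
    assert (t2 : t <= d e l) by apply Rmin_r.
    assert (t3 : d e m < t) by (unfold t, Rmin; destruct Rle_dec; lra).
    unfold Bt in *.
    pose proof (d0 k c). pose proof (d0 e m).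
    destruct (Bt_ex d e c t Ht ltac:(lra)) as [q [Q1 Q2]].
    assert (Qk : Bt d e q k) by (apply (Bt_order d e q k c Ht Q1 K2); lra).
    assert (Ql : Bt d e q l) by (apply (Bt_order d e q l c Ht Q1 L2); lra).
    assert (Ha : Bt d e q a) by (exact (Bt_trans d e q k a Ht Qk K1)).
    assert (Hb : Bt d e q b) by (exact (Bt_trans d e q l b Ht Ql L1)).
    unfold Bt in *. pose proof (dtri a q b). pose proof (dsym a q).
    pose proof (dsym e a). pose proof (dsym e b). pose proof (dsym a m). lra. }
  unfold Bt in *.
  pose proof (dsym a m). pose proof (dsym a k). pose proof (dsym b l).
  pose proof (dsym e a). pose proof (dsym e b). pose proof (dsym b e).
  pose proof (dsym a e). pose proof (dsym e c).
  destruct Key; [left|right]; lra.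
Qed.

Theorem lemma3 (X : Type) (d : X -> X -> R) (x y z r : X) (V : list X) :
  tree_space d ->
  x <> y -> y <> z -> x <> z ->
  steiner_point d x y z r ->
  ~ In x V -> ~ In y V -> ~ In z V ->
  (forall w, In w V -> zone1 d x y z w ->
     forall wh, In wh V -> ~ zone1 d x y z wh -> in_g d w wh x) /\
  (forall w, In w V -> zone2 d x y z w ->
     forall wh, In wh V -> ~ zone1 d x y z wh -> ~ zone2 d x y z wh ->
       in_g d w wh r).
Proof.
  intros Ht Hxy Hyz Hxz [S1 [S2 S3]] _ _ _.
  apply (in_g_Bt d _ _ _ Ht) in S1. apply (in_g_Bt d _ _ _ Ht) in S2.
  apply (in_g_Bt d _ _ _ Ht) in S3.
  pose proof Ht as [[d0 [deq [dsym dtri]]] _].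
  unfold Bt in *.
  split.
  - intros w _ Hz1 wh _ Hn. apply Bt_in_g; auto. unfold Bt.
    destruct (Rle_lt_or_eq_dec _ _ (dtri w x wh)) as [Hlt|Heq]; [|lra].
    exfalso. apply Hn.
    unfold zone1, gromov in *.
    pose proof (fpc d w y wh x Ht) as I1.
    pose proof (fpc d w z wh x Ht) as I2.
    pose proof (dtri wh x y). pose proof (dtri wh x z).
    pose proof (dsym x w). pose proof (dsym x wh). pose proof (dsym y x).
    pose proof (dsym z x). pose proof (dsym y wh). pose proof (dsym z wh).
    destruct Hz1 as [Z1 [Z2 Z3]].
    destruct I1; destruct I2; try lra.
    all: split; [|split]; lra.
  - intros w _ Hz2 wh _ Hn1 Hn2. apply Bt_in_g; auto. unfold Bt.
    destruct (Rle_lt_or_eq_dec _ _ (dtri w r wh)) as [Hlt|Heq]; [|lra].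
    exfalso.
    unfold zone1, zone2, gromov in *.
    destruct Hz2 as [Z1 [Z2 Z3]].
    pose proof (fpc d w r z y Ht) as I1.
    pose proof (fpc d w y r wh Ht) as I2.
    pose proof (fpc d w z r wh Ht) as I3.
    pose proof (fpc d w r x wh Ht) as I4.
    pose proof (dsym x w). pose proof (dsym x wh). pose proof (dsym y x).
    pose proof (dsym z x). pose proof (dsym y wh). pose proof (dsym z wh).
    pose proof (dsym r y). pose proof (dsym r z). pose proof (dsym r x).
    pose proof (dsym r wh). pose proof (dsym y r). pose proof (dsym z r).
    pose proof (dsym z y).
    pose proof (dtri w r y). pose proof (dtri w r z). pose proof (dtri wh r y).
    pose proof (dtri wh r z). pose proof (dtri wh x y).
    assert (W1 : d w y = d w r + d r y /\ d w z = d w r + d r z).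
    { pose proof (dtri w r y). destruct I1; split; lra. }
    assert (A1 : d wh y = d wh r + d r y) by (destruct I2; lra).
    assert (A2 : d wh z = d wh r + d r z) by (destruct I3; lra).
    assert (A3 : d wh x < d wh r + d r x) by (destruct I4; lra).
    destruct (Rle_lt_or_eq_dec ((d wh x + d wh y - d x y) / 2) (d x wh))
      as [h|h]; [lra| |].
    + apply Hn2. split; [|split]; lra.
    + apply Hn1. split; [|split]; lra.
Qed.
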